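(* Let $E$, $(\cdot\,\cdot)$, $|\cdot|$, $v$, and $f$ be as in the continuous-solution construction below, and assume in addition that $v$ is a $C^\infty$-diffeomorphism. Define $r:\mathbb{R}\to\mathbb{R}$ by $v''=r\,v'$ and $s:E\times E\to E$ by $s(a,b)=r\big((ab)/|b|\big)|b|\,b$ for $b\ne0$, $s(a,0)=0$. Then $s(a,\lambda b)=\lambda^2 s(a,b)$ for all $\lambda\in\mathbb{R}$, $a,b\in E$, and every $g\in\mathrm{Geo}\,f$ is twice differentiable and satisfies $g''(t)+s(g(t),g'(t))=0$ on its domain.
   Context: $E$ is a real finite-dimensional inner product space with inner product $(a,b)\mapsto(ab)$ and norm $|\cdot|$; $v:\mathbb{R}\to\mathbb{R}$ is an odd homeomorphism. For $a\ne b$, $e=(a-b)/|a-b|$ and $v_{ab}(c)=c+(v((ce))-(ce))e$ (a bijection of $E$); $f:E\times E\times[0,1]\to E$ is $f(a,b,\gamma)=v_{ab}^{-1}((1-\gamma)v_{ab}(a)+\gamma v_{ab}(b))$ for $a\ne b$, $f(a,a,\gamma)=a$. $\mathrm{Geo}\,f$ is the set of maps $g:I\to E$ ($I\subset\mathbb{R}$ an open interval) such that for every $\tau\in I$ there exist $\alpha,\beta\in I$ with $\alpha<\tau<\beta$ and $g((1-\gamma)\alpha+\gamma\beta)=f(g(\alpha),g(\beta),\gamma)$ for all $\gamma\in[0,1]$. *)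

(* Defs.v *)
From HB Require Import structures.
From mathcomp Require Import all_boot all_order all_algebra.
From mathcomp Require Import all_classical all_reals all_analysis.
Set Implicit Arguments. Unset Strict Implicit. Unset Printing Implicit Defensive.
Import Order.TTheory GRing.Theory Num.Theory.
Import numFieldNormedType.Exports.
Local Open Scope classical_set_scope.
Local Open Scope ring_scope.

(* E is modelled as R^n = 'rV[R]_n with the standard (Euclidean) inner product. *)
Section Defs.
Variables (R : realType) (n : nat).
Notation E := 'rV[R]_n.

Definition ipdot (a b : E) : R := (a *m b^T) 0 0.
Definition ipnorm (a : E) : R := Num.sqrt (ipdot a a).

Definition edir (a b : E) : E := (ipnorm (a - b))^-1 *: (a - b).

Definition vab (v : R -> R) (a b : E) (c : E) : E :=
  c + (v (ipdot c (edir a b)) - ipdot c (edir a b)) *: edir a b.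

(* The inverse v_ab^{-1} is taken as the map v_ab built from the inverse vinv of v
   (for vinv the two-sided inverse of v, this is the two-sided inverse of v_ab). *)
Definition fgeo (v vinv : R -> R) (a b : E) (gamma : R) : E :=
  if a == b then a
  else vab vinv a b ((1 - gamma) *: vab v a b a + gamma *: vab v a b b).

Definition is_open_interval (I : set R) := open I /\ is_interval I.

Definition in_Geo (v vinv : R -> R) (I : set R) (g : R -> E) : Prop :=
  is_open_interval I /\
  forall tau, I tau ->
    exists alpha beta, [/\ I alpha, I beta, alpha < tau, tau < beta &
      forall gamma, 0 <= gamma <= 1 ->
        g ((1 - gamma) * alpha + gamma * beta) = fgeo v vinv (g alpha) (g beta) gamma].

Definition s_geo (r : R -> R) (a b : E) : E :=
  if b == 0 then 0 else (r (ipdot a b / ipnorm b) * ipnorm b) *: b.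

End Defs.

Definition smooth_fun (R : realType) (h : R -> R) : Prop :=
  forall (k : nat) (x : R), derivable (derive1n k h) x 1.

Definition odd_homeo (R : realType) (v vinv : R -> R) : Prop :=
  [/\ forall x, v (- x) = - v x, cancel v vinv, cancel vinv v,
      continuous v & continuous vinv].

Definition smooth_diffeo (R : realType) (v vinv : R -> R) : Prop :=
  [/\ cancel v vinv, cancel vinv v, smooth_fun v & smooth_fun vinv].

(* Main.v *)
Require Import Defs.
From HB Require Import structures.
From mathcomp Require Import all_boot all_order all_algebra.
From mathcomp Require Import all_classical all_reals all_analysis.
From mathcomp Require Import ring lra.
Import Order.TTheory GRing.Theory Num.Theory.
Import numFieldNormedType.Exports.
Local Open Scope classical_set_scope.
Local Open Scope ring_scope.
Lemma d1P (R : realType) (V : normedModType R) (f : R -> V) (x : R) :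
  derivable f x 1 -> is_derive x 1 f (derive1 f x).
Proof. by move=> h; rewrite derive1E; apply: derivableP. Qed.

Lemma d1_val (R : realType) (V : normedModType R) (f : R -> V) (x : R) (df : V) :
  is_derive x 1 f df -> derive1 f x = df.
Proof. by move=> h; rewrite derive1E derive_val. Qed.

Lemma sm_der (R : realType) (v : R -> R) : smooth_fun v ->
  (forall x, derivable v x 1) /\ (forall x, derivable (derive1 v) x 1).
Proof. by move=> h; split=> x; [exact: (h 0%N x)|exact: (h 1%N x)]. Qed.

Lemma inv_prod (R : realType) (v vinv : R -> R) : smooth_diffeo v vinv ->
  forall x, derive1 vinv (v x) * derive1 v x = 1.
Proof.
case=> c1 c2 sv svi x.
have [dv _] := sm_der _ _ sv; have [dvi _] := sm_der _ _ svi.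
rewrite -derive1_comp //.
have -> : vinv \o v = id by apply/funext => y /=; rewrite c1.
exact: derive1_id.
Qed.

Lemma dv_neq0 (R : realType) (v vinv : R -> R) : smooth_diffeo v vinv ->
  forall x, derive1 v x != 0.
Proof.
move=> h x; apply/negP => /eqP e.
by have := inv_prod _ _ _ h x; rewrite e mulr0 => /esym/eqP; rewrite oner_eq0.
Qed.

Lemma dvi2 (R : realType) (v vinv r : R -> R) : smooth_diffeo v vinv ->
  (forall x : R, derive1n 2 v x = r x * derive1n 1 v x) ->
  forall y, derive1 (derive1 vinv) y = - r (vinv y) * (derive1 vinv y) ^+ 2.
Proof.
move=> h hr y.
have hh := h; case: hh => c1 c2 sv svi.
have [dv ddv] := sm_der _ _ sv; have [dvi ddvi] := sm_der _ _ svi.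
have H := is_deriveM (d1P _ _ _ _ (ddvi y))
  (is_derive1_comp (d1P _ _ _ _ (ddv (vinv y))) (d1P _ _ _ _ (dvi y))).
have E : (derive1 vinv * (derive1 v \o vinv)) = cst 1.
  apply/funext => z; change (derive1 vinv z * derive1 v (vinv z) = 1); by rewrite -{1}(c2 z) (inv_prod _ _ _ h).
rewrite E in H.
have := d1_val _ _ _ _ _ H; rewrite derive1_cst /= => /esym /eqP.
have := hr (vinv y); rewrite /derive1n /= => ->.
set a := derive1 (derive1 vinv) y; set b := derive1 vinv y.
set c := derive1 v (vinv y); set rr := r (vinv y).
have cn0 : c != 0 by apply: dv_neq0 _ _ _ h _.
rewrite /GRing.scale /=.
move=> e.
have e2 : c * (a + rr * b ^+ 2) = 0.
  by rewrite -(eqP e); ring.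
move/eqP: e2; rewrite mulf_eq0 (negPf cn0) /= addr_eq0 => /eqP ->.
by rewrite mulNr.
Qed.

Lemma even_der (R : realType) (w : R -> R) :
  (forall x, derivable w x 1) -> (forall x, w (- x) = - w x) ->
  forall x, derive1 w (- x) = derive1 w x.
Proof.
move=> dw ow x.
have H1 := is_derive1_comp (d1P _ _ _ _ (dw (- x))) (@is_deriveNid _ _ x 1).
have E : (w \o -%R) = - w by apply/funext => z /=; rewrite ow.
rewrite E in H1.
have H2 := is_deriveN (d1P _ _ _ _ (dw x)).
have := d1_val _ _ _ _ _ H1; rewrite (d1_val _ _ _ _ _ H2) => /eqP.
rewrite mulrN1 eqr_opp => /eqP ->. by [].
Qed.

Lemma odd_der (R : realType) (w : R -> R) :
  (forall x, derivable w x 1) -> (forall x, w (- x) = w x) ->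
  forall x, derive1 w (- x) = - derive1 w x.
Proof.
move=> dw ow x.
have H1 := is_derive1_comp (d1P _ _ _ _ (dw (- x))) (@is_deriveNid _ _ x 1).
have E : (w \o -%R) = w by apply/funext => z /=; rewrite ow.
rewrite E in H1.
have := d1_val _ _ _ _ _ H1 => ->.
by rewrite mulrN1 opprK.
Qed.

Lemma r_odd (R : realType) (v vinv r : R -> R) :
  (forall x, v (- x) = - v x) -> smooth_diffeo v vinv ->
  (forall x : R, derive1n 2 v x = r x * derive1n 1 v x) ->
  forall x, r (- x) = - r x.
Proof.
move=> ov h hr x.
have hh := h; case: hh => c1 c2 sv svi.
have [dv ddv] := sm_der _ _ sv.
have ev := even_der _ _ dv ov.
have od := odd_der _ _ ddv ev.
have := hr (- x); have := hr x; rewrite /derive1n /= od ev => ->.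
move=> /eqP; rewrite -mulNr (inj_eq (mulIf (dv_neq0 _ _ _ h x))) => /eqP.
by [].
Qed.
Lemma ipdotE (R : realType) n (a b : 'rV[R]_n) :
  ipdot a b = \sum_j a 0 j * b 0 j.
Proof. by rewrite /ipdot !mxE; apply: eq_bigr => j _; rewrite !mxE. Qed.

Lemma ipdotC (R : realType) n (a b : 'rV[R]_n) : ipdot a b = ipdot b a.
Proof. by rewrite !ipdotE; apply: eq_bigr => j _; rewrite mulrC. Qed.

Lemma ipdotDl (R : realType) n (a b c : 'rV[R]_n) :
  ipdot (a + b) c = ipdot a c + ipdot b c.
Proof. by rewrite !ipdotE -big_split; apply: eq_bigr => j _; rewrite !mxE mulrDl. Qed.

Lemma ipdotZl (R : realType) n k (a c : 'rV[R]_n) :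
  ipdot (k *: a) c = k * ipdot a c.
Proof. by rewrite !ipdotE mulr_sumr; apply: eq_bigr => j _; rewrite !mxE mulrA. Qed.

Lemma ipdotNl (R : realType) n (a c : 'rV[R]_n) :
  ipdot (- a) c = - ipdot a c.
Proof. by rewrite -scaleN1r ipdotZl mulN1r. Qed.

Lemma ipdotBl (R : realType) n (a b c : 'rV[R]_n) :
  ipdot (a - b) c = ipdot a c - ipdot b c.
Proof. by rewrite ipdotDl ipdotNl. Qed.

Lemma ipdotZr (R : realType) n k (a c : 'rV[R]_n) :
  ipdot c (k *: a) = k * ipdot c a.
Proof. by rewrite ipdotC ipdotZl ipdotC. Qed.

Lemma ipdot_ge0 (R : realType) n (a : 'rV[R]_n) : 0 <= ipdot a a.
Proof. by rewrite ipdotE; apply: sumr_ge0 => j _; rewrite -expr2 sqr_ge0. Qed.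

Lemma ipdot_eq0 (R : realType) n (a : 'rV[R]_n) : ipdot a a = 0 -> a = 0.
Proof.
rewrite ipdotE => /eqP; rewrite psumr_eq0; last by move=> j _; rewrite -expr2 sqr_ge0.
move=> /allP H; apply/rowP => j; rewrite !mxE.
have /implyP := H j (mem_index_enum j); move=> /(_ isT).
by rewrite -expr2 sqrf_eq0 => /eqP.
Qed.

Lemma ipnorm_sq (R : realType) n (a : 'rV[R]_n) : ipnorm a ^+ 2 = ipdot a a.
Proof. by rewrite /ipnorm sqr_sqrtr // ipdot_ge0. Qed.

Lemma ipnorm_ge0 (R : realType) n (a : 'rV[R]_n) : 0 <= ipnorm a.
Proof. exact: sqrtr_ge0. Qed.

Lemma ipnormZ (R : realType) n k (a : 'rV[R]_n) : ipnorm (k *: a) = `|k| * ipnorm a.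
Proof.
by rewrite /ipnorm ipdotZl ipdotZr mulrA -expr2 sqrtrM ?sqr_ge0 // sqrtr_sqr.
Qed.

Lemma ipnorm_eq0 (R : realType) n (a : 'rV[R]_n) : (ipnorm a == 0) = (a == 0).
Proof.
apply/idP/idP => [/eqP h|/eqP ->].
  apply/eqP/ipdot_eq0; by rewrite -ipnorm_sq h expr0n.
by rewrite /ipnorm ipdotE big1 ?sqrtr0 // => j _; rewrite mxE mul0r.
Qed.

Lemma edir_facts (R : realType) n (a b : 'rV[R]_n) : a != b ->
  [/\ ipdot (edir a b) (edir a b) = 1, ipnorm (edir a b) = 1 &
      a - b = ipnorm (a - b) *: edir a b].
Proof.
move=> ab; have d0 : ipnorm (a - b) != 0 by rewrite ipnorm_eq0 subr_eq0.
have e3 : a - b = ipnorm (a - b) *: edir a b.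
  by rewrite /edir scalerA divff // scale1r.
have en : ipnorm (edir a b) = 1.
  by rewrite /edir ipnormZ ger0_norm ?invr_ge0 ?ipnorm_ge0 // mulVf.
split => //; by rewrite -ipnorm_sq en expr1n.
Qed.

Lemma s_hom (R : realType) n (r : R -> R) (ro : forall x, r (- x) = - r x)
  (lam : R) (a b : 'rV[R]_n) :
  s_geo r a (lam *: b) = lam ^+ 2 *: s_geo r a b.
Proof.
rewrite /s_geo; have [->|b0] := eqVneq b 0; first by rewrite (@scaler0 _ _ lam) eqxx (@scaler0 _ _ (lam ^+ 2)).
have [->|l0] := eqVneq lam 0; first by rewrite (@scale0r _ _ b) eqxx expr0n /= (@scale0r _ _ (_ *: b)).
rewrite scaler_eq0 (negPf l0) (negPf b0) /=.
rewrite ipdotZr ipnormZ !scalerA; congr (_ *: _).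
have nb : ipnorm b != 0 by rewrite ipnorm_eq0.
have [lp|ln] := ltrP 0 lam.
  rewrite gtr0_norm // -mulf_div divff // mul1r; ring.
rewrite ler0_norm // -mulf_div.
have -> : lam / - lam = -1 by rewrite invrN mulrN divff.
rewrite mulN1r ro; ring.
Qed.

Lemma fgeo_line (R : realType) n (v vinv : R -> R) (a b : 'rV[R]_n) (g : R) :
  a != b ->
  fgeo v vinv a b g =
  a + (vinv (v (ipdot a (edir a b)) + g * (v (ipdot b (edir a b)) - v (ipdot a (edir a b))))
       - ipdot a (edir a b)) *: edir a b.
Proof.
move=> ab; rewrite /fgeo (negPf ab) /vab.
have [ee _ abe] := edir_facts _ _ _ _ ab.
move: abe ee; move: (edir a b) (ipnorm (a - b)) => e d abe ee.
have Hb : b = a - d *: e by rewrite -abe opprB addrC subrK.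
set q1 := ipdot a e; set q2 := ipdot b e.
have q2E : q2 = q1 - d by rewrite /q2 Hb ipdotBl ipdotZl ee mulr1.
set w1 := v q1; set w2 := v q2.
set c := _ + _ *: (b + _).
have L : ipdot c e = w1 + g * (w2 - w1).
  rewrite /c !ipdotDl !ipdotZl !ipdotDl !ipdotZl ee -/q1 -/q2; ring.
rewrite L; apply/rowP => j; rewrite /c q2E Hb !mxE; ring.
Qed.
Lemma line_is_derive (R : realType) n (a e : 'rV[R]_n) (k : R -> R) (u dk : R) :
  is_derive u 1 k dk -> is_derive u 1 (fun t => a + k t *: e) (dk *: e).
Proof.
move=> [kd kv].
have Hq : (fun h : R => h^-1 *: ((k \o shift u) (h *: 1) - k u)) @ 0^' --> dk.
  by rewrite -kv; exact: kd.
have E : (fun h : R => h^-1 *: (((fun t => a + k t *: e) \o shift u) (h *: 1) - (a + k u *: e)))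
   = (fun h => (h^-1 *: ((k \o shift u) (h *: 1) - k u)) *: e).
  apply/funext => h /=.
  by rewrite opprD addrACA subrr add0r -scalerBl scalerA.
have Hc : (fun h : R => h^-1 *: (((fun t => a + k t *: e) \o shift u) (h *: 1) - (a + k u *: e))) @ 0^' --> dk *: e.
  by rewrite E; apply: cvgZr_tmp.
apply: DeriveDef; first by apply/cvg_ex; exists (dk *: e).
exact: cvg_lim Hc.
Qed.

Lemma transfer (R : realType) n (g G : R -> 'rV[R]_n) (t al be : R) :
  al < t < be -> (forall u, al < u < be -> g u = G u) ->
  (forall u, derivable G u 1) -> (forall u, derivable (derive1 G) u 1) ->
  [/\ derivable g t 1, derivable (derive1 g) t 1 &
      derive1 (derive1 g) t = derive1 (derive1 G) t /\ derive1 g t = derive1 G t].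
Proof.
move=> tab eq dG ddG.
have nb : forall y, al < y < be -> \forall z \near y, al < z < be.
  move=> y yab; have : y \in `]al, be[ by rewrite in_itv.
  move/near_in_itvoo; apply: filterS => z; by rewrite in_itv.
have Hn : forall y, al < y < be -> \forall z \near y, G z = g z.
  by move=> y yab; apply: filterS (nb y yab) => z /eq ->.
have Hd : forall y, al < y < be -> derive1 g y = derive1 G y.
  move=> y yab; rewrite !derive1E; apply: near_eq_derive.
  by apply: filterS (Hn y yab) => z ->.
have Hn2 : \forall z \near t, derive1 G z = derive1 g z.
  by apply: filterS (nb t tab) => z /Hd ->.
split.
- exact: near_eq_derivable (Hn t tab) (dG t).
- exact: near_eq_derivable Hn2 (ddG t).
- split; last by apply: Hd. rewrite !derive1E; apply: near_eq_derive.
  by apply: filterS Hn2 => z ->.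
Qed.

Lemma aff_derive (R : realType) (c d u : R) : is_derive u 1 (fun x : R => x * c + d) c.
Proof.
have H := is_deriveD (is_deriveM (@is_derive_id _ _ u 1) (is_derive_cst c u 1)) (is_derive_cst d u 1).
have -> : (fun x : R => x * c + d) = id * cst c + cst d by apply/funext.
apply: is_derive_eq H _.
rewrite /GRing.scale /=; ring.
Qed.

Theorem mainTheorem9 (R : realType) (n : nat) (v vinv r : R -> R)
  (hv : odd_homeo v vinv) (hdiff : smooth_diffeo v vinv)
  (hr : forall x : R, derive1n 2 v x = r x * derive1n 1 v x) :
  (forall (lam : R) (a b : 'rV[R]_n),
     s_geo r a (lam *: b) = lam ^+ 2 *: s_geo r a b) /\
  (forall (I : set R) (g : R -> 'rV[R]_n), in_Geo v vinv I g ->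
     forall t, I t ->
       [/\ derivable g t 1, derivable (derive1 g) t 1 &
           derive1n 2 g t + s_geo r (g t) (derive1 g t) = 0]).
Proof.
have hh := hdiff; case: hh => c1 c2 sv svi.
have [dv ddv] := sm_der _ _ sv; have [dvi ddvi] := sm_der _ _ svi.
have ov : forall x, v (- x) = - v x by case: hv.
have ro := r_odd _ _ _ _ ov hdiff hr.
split; first by move=> lam a b; exact: s_hom.
move=> I g [_ Hg] t It.
have [al [be [_ _ alt tbe Hf]]] := Hg t It.
have albe : al < be by exact: lt_trans alt tbe.
have ba0 : be - al != 0 by rewrite subr_eq0 gt_eqF.
have tab : al < t < be by rewrite alt tbe.
have Hu : forall u, al < u < be ->
    g u = fgeo v vinv (g al) (g be) ((u - al) / (be - al)).
  move=> u /andP[h1 h2]; rewrite -Hf.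
    by congr g; field.
  apply/andP; split.
    by rewrite divr_ge0 // ltW // subr_gt0.
  by rewrite ler_pdivrMr ?subr_gt0 // mul1r lerD2r ltW.
have -> : derive1n 2 g t = derive1 (derive1 g) t by [].
have [ab|ab] := eqVneq (g al) (g be).
  have E0 : derive1 (cst (g al)) = cst 0 by apply/funext => u; rewrite derive1_cst.
  have eqg : forall u, al < u < be -> g u = cst (g al) u.
    by move=> u hu; rewrite (Hu u hu) /fgeo -ab eqxx.
  have dG : forall u : R, derivable (cst (g al)) u 1 by move=> u; exact: derivable_cst.
  have ddG : forall u : R, derivable (derive1 (cst (g al))) u 1.
    by move=> u; rewrite E0; exact: derivable_cst.
  have [D1 D2 [D3 D4]] := transfer _ _ g (cst (g al)) t al be tab eqg dG ddG.
  split; [exact: D1|exact: D2|].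
  rewrite D3 D4 E0 derive1_cst.
  by rewrite add0r /s_geo /= eqxx.
set a := g al; set b := g be.
have [ee en abe] := edir_facts _ _ _ _ ab.
move: ee en abe; set e := edir a b => ee en abe.
set q1 := ipdot a e; set w1 := v q1; set w2 := v (ipdot b e).
set c := (w2 - w1) / (be - al).
set l := fun x : R => x * c + (w1 - al * c).
set k := fun x : R => vinv (l x) - q1.
set G := fun x : R => a + k x *: e.
have Hl : forall u : R, is_derive u 1 l c by move=> u; exact: aff_derive.
have Hk : forall u : R, is_derive u 1 k (derive1 vinv (l u) * c).
  move=> u.
  have H := is_deriveB (is_derive1_comp (d1P _ _ _ _ (dvi (l u))) (Hl u)) (is_derive_cst q1 u 1).
  have -> : k = vinv \o l - cst q1 by apply/funext.
  by apply: is_derive_eq H _; rewrite subr0.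
have HG : forall u : R, is_derive u 1 G ((derive1 vinv (l u) * c) *: e).
  by move=> u; exact: line_is_derive.
have D1G : derive1 G = fun u => 0 + (derive1 vinv (l u) * c) *: e.
  by apply/funext => u; rewrite (d1_val _ _ _ _ _ (HG u)) add0r.
have Hk2 : forall u : R, is_derive u 1 (fun u => derive1 vinv (l u) * c)
    (derive1 (derive1 vinv) (l u) * c * c).
  move=> u.
  have H := is_deriveM (is_derive1_comp (d1P _ _ _ _ (ddvi (l u))) (Hl u)) (is_derive_cst c u 1).
  have -> : (fun u => derive1 vinv (l u) * c) = (derive1 vinv \o l) * cst c by apply/funext.
  apply: is_derive_eq H _; rewrite /GRing.scale /=; ring.
have HG2 : forall u : R, is_derive u 1 (derive1 G) ((derive1 (derive1 vinv) (l u) * c * c) *: e).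
  by move=> u; rewrite D1G; exact: line_is_derive.
have eqg : forall u : R, al < u < be -> g u = G u.
  move=> u hu; rewrite (Hu u hu) fgeo_line // /G /k /l -/e -/q1 -/w1 -/w2.
  congr (a + (vinv _ - q1) *: e); rewrite /c; field; exact: ba0.
have dG : forall u : R, derivable G u 1 by move=> u; case: (HG u).
have ddG : forall u : R, derivable (derive1 G) u 1 by move=> u; case: (HG2 u).
have [D1 D2 [D3 D4]] := transfer _ _ g G t al be tab eqg dG ddG.
split; [exact: D1|exact: D2|].
rewrite D3 D4 (d1_val _ _ _ _ _ (HG2 t)) (d1_val _ _ _ _ _ (HG t)) (eqg t tab).
rewrite (dvi2 _ _ _ _ hdiff hr) (s_hom _ _ _ ro).
have e0 : e != 0 by rewrite -ipnorm_eq0 en oner_eq0.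
have hG : ipdot (G t) e = vinv (l t).
  rewrite /G ipdotDl ipdotZl ee mulr1 /k -/q1; ring.
rewrite /s_geo (negPf e0) hG en divr1 mulr1 !scalerA -scalerDl.
apply/eqP; rewrite scaler_eq0; apply/orP; left; apply/eqP; ring.
Qed.
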